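(* Let $f$ and $F$ be the density and CDF of the standard Gaussian distribution. For every $\alpha\in(0,1)$ and every $z\in\mathbb{R}$, $$\frac{f(z)|z|^\alpha}{(1-F(z))^{1-\alpha}} \le \frac{2}{\alpha}.$$ *)

(* Defs.v *)
From Stdlib Require Import Reals Lra.
From Coquelicot Require Import Coquelicot.
Open Scope R_scope.

Definition gauss_pdf (x : R) : R := exp (- x ^ 2 / 2) / sqrt (2 * PI).

Definition gauss_cdf (z : R) : R :=
  RInt_gen gauss_pdf (Rbar_locally m_infty) (at_point z).

(* |x|^a for a > 0, with the convention 0^a = 0 *)
Definition abs_rpow (x a : R) : R :=
  if Req_EM_T x 0 then 0 else Rpower (Rabs x) a.

(* Main.v *)
Require Import Defs.
From Stdlib Require Import Reals Lra.
From Coquelicot Require Import Coquelicot.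
Open Scope R_scope.

Definition gg (t : R) : R := exp (- t ^ 2 / 2).
Definition GG (x : R) : R := RInt gg 0 x.
Definition kk (x t : R) : R := exp (- (x ^ 2 * (1 + t ^ 2)) / 2) / (1 + t ^ 2).
Definition KK (x : R) : R := RInt (fun t => kk x t) 0 1.
Definition hh (x : R) : R := GG x ^ 2 + 2 * KK x.

Lemma gg_cont x : continuous gg x.
Proof. apply (ex_derive_continuous (K := R_AbsRing) (V := R_NormedModule)); unfold gg; auto_derive; auto. Qed.

Lemma ex_RInt_gg a b : ex_RInt gg a b.
Proof. apply (ex_RInt_continuous (V := R_CompleteNormedModule)); intros; apply gg_cont. Qed.

Lemma GG_deriv (x : R) : is_derive GG x (gg x).
Proof.
  apply is_derive_RInt with (a := 0).
  - apply filter_forall; intros; apply (RInt_correct (V := R_CompleteNormedModule)), ex_RInt_gg.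
  - apply gg_cont.
Qed.

Lemma pos1t t : 0 < 1 + t ^ 2.
Proof. nra. Qed.

Lemma kk_deriv (x t : R) : is_derive (fun u => kk u t) x (- x * exp (- (x ^ 2 * (1 + t ^ 2)) / 2)).
Proof.
  unfold kk. auto_derive.
  - auto.
  - replace (- (x * (x * 1) * (1 + t * (t * 1))) * / 2) with (- (x ^ 2 * (1 + t ^ 2)) / 2) by field.
    field. generalize (pos1t t); lra.
Qed.

Lemma kk_cont x t : continuous (kk x) t.
Proof.
  apply (ex_derive_continuous (K := R_AbsRing) (V := R_NormedModule)); unfold kk; auto_derive. generalize (pos1t t); lra.
Qed.

Lemma ex_RInt_kk x a b : ex_RInt (fun t => kk x t) a b.
Proof. apply (ex_RInt_continuous (V := R_CompleteNormedModule)); intros; apply kk_cont. Qed.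

Lemma exp_cont_pt y : continuity_pt exp y.
Proof. apply derivable_continuous_pt, derivable_pt_exp. Qed.

Lemma dk_cont x t : continuity_2d_pt (fun u v => Derive (fun z => kk z v) u) x t.
Proof.
  apply continuity_2d_pt_ext with
    (f := fun u v => - u * exp (- (u ^ 2 * (1 + v ^ 2)) / 2)).
  { intros u v. symmetry. apply is_derive_unique, kk_deriv. }
  apply continuity_2d_pt_mult.
  - apply continuity_2d_pt_ext with (f := fun u v => - u). { intros; ring. }
    apply continuity_2d_pt_opp, continuity_2d_pt_id1.
  - apply continuity_1d_2d_pt_comp with (f := exp)
      (g := fun u v => - (u ^ 2 * (1 + v ^ 2)) / 2).
    + apply exp_cont_pt.
    + apply continuity_2d_pt_ext with
        (f := fun u v => (u * u * (1 + v * v)) * (- / 2)).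
      { intros; simpl; field. }
      apply continuity_2d_pt_mult; [|apply continuity_2d_pt_const].
      apply continuity_2d_pt_mult.
      * apply continuity_2d_pt_mult; apply continuity_2d_pt_id1.
      * apply continuity_2d_pt_plus; [apply continuity_2d_pt_const|].
        apply continuity_2d_pt_mult; apply continuity_2d_pt_id2.
Qed.

Lemma KK_deriv (x : R) : is_derive KK x (- gg x * GG x).
Proof.
  unfold KK.
  assert (H := is_derive_RInt_param kk 0 1 x).
  replace (- gg x * GG x) with (RInt (fun t => Derive (fun u => kk u t) x) 0 1).
  - apply H.
    + apply filter_forall; intros y t _. eexists; apply kk_deriv.
    + intros; apply dk_cont.
    + apply filter_forall; intros; apply ex_RInt_kk.
  - rewrite (RInt_ext (V := R_CompleteNormedModule)) with (g := fun t => scal (- gg x) (scal x (gg (x * t + 0)))).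
    + rewrite (RInt_scal (V := R_CompleteNormedModule)).
      * rewrite (RInt_comp_lin (V := R_CompleteNormedModule)). unfold GG. replace (x * 0 + 0) with 0 by ring.
        replace (x * 1 + 0) with x by ring. reflexivity.
        apply ex_RInt_gg.
      * apply (ex_RInt_comp_lin (V := R_CompleteNormedModule)), ex_RInt_gg.
    + intros t _. erewrite is_derive_unique; [| apply kk_deriv].
      unfold scal; simpl; unfold mult; simpl. unfold gg.
      match goal with |- _ * exp ?A = - exp ?B * (_ * exp ?C) =>
        replace A with (B + C) by (simpl; field) end.
      rewrite exp_plus. ring.
Qed.


Lemma hh_deriv (x : R) : is_derive hh x 0.
Proof.
  unfold hh.
  replace 0 with (INR 2 * gg x * GG x ^ 1 + 2 * (- gg x * GG x)).
  - apply (is_derive_plus (K := R_AbsRing) (V := R_NormedModule)).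
    + apply (is_derive_pow GG 2 x (gg x)), GG_deriv.
    + apply (is_derive_scal KK x 2 (- gg x * GG x)), KK_deriv.
  - simpl; ring.
Qed.

Lemma hh_const (x : R) : hh x = hh 0.
Proof.
  assert (H := is_RInt_derive (V := R_CompleteNormedModule) hh (fun _ => 0) 0 x).
  assert (H1 : is_RInt (fun _ => 0) 0 x (minus (hh x) (hh 0))).
  { apply H. intros; apply hh_deriv. intros; apply continuous_const. }
  apply (is_RInt_unique (V := R_CompleteNormedModule)) in H1. rewrite (RInt_const (V := R_CompleteNormedModule)) in H1.
  unfold minus, plus, opp, scal in H1; simpl in H1. unfold mult in H1; simpl in H1.
  unfold plus, opp in H1; simpl in H1. lra.
Qed.

Lemma KK0 : KK 0 = PI / 4.
Proof.
  unfold KK.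
  rewrite (RInt_ext (V := R_CompleteNormedModule)) with (g := fun t => / (1 + t ^ 2)).
  - assert (H := is_RInt_derive (V := R_CompleteNormedModule) atan (fun t => / (1 + t ^ 2)) 0 1).
    assert (H' : is_RInt (fun t : R => / (1 + t ^ 2)) 0 1 (minus (atan 1) (atan 0))).
    { apply H.
    + intros. apply is_derive_Reals, derivable_pt_lim_atan.
    + intros. apply (ex_derive_continuous (K := R_AbsRing) (V := R_NormedModule)).
      auto_derive. generalize (pos1t x); lra. }
    rewrite (is_RInt_unique (V := R_CompleteNormedModule) _ _ _ _ H').
    rewrite atan_1, atan_0. unfold minus, plus, opp; simpl. lra.
  - intros t _. unfold kk. replace (- (0 ^ 2 * (1 + t ^ 2)) / 2) with 0 by field.
    rewrite exp_0. unfold Rdiv. rewrite Rmult_1_l. reflexivity.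
Qed.

Lemma KK_ge0 (x : R) : 0 <= KK x.
Proof.
  unfold KK. apply RInt_ge_0. lra. apply ex_RInt_kk.
  intros t _. unfold kk. apply Rlt_le, Rdiv_lt_0_compat. apply exp_pos. apply pos1t.
Qed.

Lemma GG_sq (x : R) : GG x ^ 2 <= PI / 2.
Proof.
  assert (H := hh_const x). unfold hh in H. rewrite KK0 in H.
  assert (E : GG 0 = 0).
  { unfold GG. rewrite (RInt_point (V := R_CompleteNormedModule)). reflexivity. }
  rewrite E in H. generalize (KK_ge0 x). intros. lra.
Qed.


Lemma exp_le_exp x y : x <= y -> exp x <= exp y.
Proof. intros [H|H]. apply Rlt_le, exp_increasing; auto. subst; lra. Qed.

Definition ss := sqrt (2 * PI).

Lemma ss_sq : ss * ss = 2 * PI.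
Proof. unfold ss. apply sqrt_sqrt. generalize PI_RGT_0; lra. Qed.

Lemma ss_pos : 0 < ss.
Proof. unfold ss. apply sqrt_lt_R0. generalize PI_RGT_0; lra. Qed.

Lemma ss_big : 122 / 50 < ss.
Proof. generalize ss_sq ss_pos PI2_3_2; intros. nra. Qed.

Lemma pdf_eq x : gauss_pdf x = / ss * gg x.
Proof. unfold gauss_pdf, gg, ss. field. generalize ss_pos; unfold ss; lra. Qed.

Lemma pdf_cont x : continuous gauss_pdf x.
Proof.
  apply (ex_derive_continuous (K := R_AbsRing) (V := R_NormedModule)); unfold gauss_pdf; auto_derive.
  generalize ss_pos; unfold ss; lra.
Qed.

Lemma ex_RInt_pdf a b : ex_RInt gauss_pdf a b.
Proof. apply (ex_RInt_continuous (V := R_CompleteNormedModule)); intros; apply pdf_cont. Qed.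

Lemma pdf_pos x : 0 < gauss_pdf x.
Proof. rewrite pdf_eq. apply Rmult_lt_0_compat. apply Rinv_0_lt_compat, ss_pos. apply exp_pos. Qed.

Lemma gg_le1 x : gg x <= 1.
Proof. unfold gg. rewrite <- exp_0. apply exp_le_exp. nra. Qed.

Lemma pdf_le x : gauss_pdf x <= / ss.
Proof.
  rewrite pdf_eq. generalize (gg_le1 x) (Rinv_0_lt_compat _ ss_pos). unfold gg. generalize (exp_pos (- x ^ 2 / 2)).
  intros. nra.
Qed.

Lemma RInt_pdf_ge0 a b : a <= b -> 0 <= RInt gauss_pdf a b.
Proof.
  intros. apply RInt_ge_0; auto. apply ex_RInt_pdf. intros; apply Rlt_le, pdf_pos.
Qed.

Lemma chasles a b c : RInt gauss_pdf a b + RInt gauss_pdf b c = RInt gauss_pdf a c.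
Proof. apply (RInt_Chasles (V := R_CompleteNormedModule)); apply ex_RInt_pdf. Qed.

Lemma half_right b : 0 <= b -> RInt gauss_pdf 0 b <= 1 / 2.
Proof.
  intros Hb.
  rewrite (RInt_ext (V := R_CompleteNormedModule)) with (g := fun x => scal (/ ss) (gg x)).
  2: { intros; rewrite pdf_eq; reflexivity. }
  rewrite (RInt_scal (V := R_CompleteNormedModule)) by apply ex_RInt_gg.
  fold (GG b). unfold scal; simpl; unfold mult; simpl.
  assert (H0 : 0 <= GG b).
  { unfold GG. apply RInt_ge_0; auto. apply ex_RInt_gg. intros; unfold gg; apply Rlt_le, exp_pos. }
  generalize (GG_sq b) ss_sq ss_pos; intros.
  assert (2 * GG b <= ss) by nra.
  apply Rmult_le_reg_l with ss; auto.
  rewrite <- Rmult_assoc, Rinv_r by lra. lra.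
Qed.

Lemma half_left a : a <= 0 -> RInt gauss_pdf a 0 <= 1 / 2.
Proof.
  intros Ha.
  assert (H := RInt_comp_lin (V := R_CompleteNormedModule) gauss_pdf (-1) 0 a 0 (ex_RInt_pdf _ _)).
  rewrite (RInt_ext (V := R_CompleteNormedModule)) with (g := fun y => opp (gauss_pdf y)) in H.
  2: { intros; unfold scal, opp; simpl; unfold mult; simpl. unfold gauss_pdf.
       replace ((-1 * x + 0) ^ 2) with (x ^ 2) by ring. ring. }
  rewrite (RInt_opp (V := R_CompleteNormedModule)) in H by apply ex_RInt_pdf.
  replace (-1 * a + 0) with (- a) in H by ring. replace (-1 * 0 + 0) with 0 in H by ring.
  rewrite <- (opp_RInt_swap (V := R_CompleteNormedModule) gauss_pdf 0 (- a)) in H by apply ex_RInt_pdf.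
  unfold opp in H; simpl in H. idtac.
  assert (RInt gauss_pdf a 0 = RInt gauss_pdf 0 (- a)) by lra.
  rewrite H0. apply half_right. lra.
Qed.


Definition EE (y : R) : Prop := exists a, a <= 0 /\ y = RInt gauss_pdf a 0.

Lemma EE_bound : bound EE.
Proof. exists (1/2). intros y [a [Ha ->]]. apply half_left; auto. Qed.

Lemma EE_ne : exists y, EE y.
Proof. exists (RInt gauss_pdf 0 0). exists 0. split; auto; lra. Qed.

Definition ll : R := proj1_sig (completeness EE EE_bound EE_ne).

Lemma ll_lub : is_lub EE ll.
Proof. unfold ll. destruct (completeness EE EE_bound EE_ne); auto. Qed.

Lemma ll_ub a : a <= 0 -> RInt gauss_pdf a 0 <= ll.
Proof. intros. apply (proj1 ll_lub). exists a; auto. Qed.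

Lemma ll_le : ll <= 1 / 2.
Proof. apply (proj2 ll_lub). intros y [a [Ha ->]]. apply half_left; auto. Qed.

Lemma ll_ge : 0 <= ll.
Proof.
  generalize (ll_ub 0 (Rle_refl 0)). rewrite (RInt_point (V := R_CompleteNormedModule)).
  unfold zero; simpl; auto.
Qed.

Lemma ll_lim : is_RInt_gen gauss_pdf (Rbar_locally m_infty) (at_point 0) ll.
Proof.
  intros P [eps HP].
  assert (Hex : exists a0, a0 <= 0 /\ ll - eps < RInt gauss_pdf a0 0).
  { apply Classical_Prop.NNPP. intros Hn.
    assert (ll <= ll - eps).
    { apply (proj2 ll_lub). intros y [a [Ha ->]].
      apply Rnot_lt_le. intros Hc. apply Hn. exists a; auto. }
    destruct eps as [e He]; simpl in *; lra. }
  destruct Hex as [a0 [Ha0 Hlt]].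
  apply Filter_prod with (Q := fun a => a < a0) (R := fun b => b = 0).
  - exists a0. auto.
  - reflexivity.
  - intros a b Ha Hb. simpl. subst b. exists (RInt gauss_pdf a 0). split.
    + apply (RInt_correct (V := R_CompleteNormedModule)), ex_RInt_pdf.
    + apply HP. 
      assert (H1 := chasles a a0 0). assert (H2 := RInt_pdf_ge0 a a0 (Rlt_le _ _ Ha)).
      assert (H3 := ll_ub a ltac:(lra)).
      change (Rabs (RInt gauss_pdf a 0 - ll) < eps).
      apply Rabs_def1; lra.
Qed.

Lemma cdf_eq z : gauss_cdf z = ll + RInt gauss_pdf 0 z.
Proof.
  unfold gauss_cdf.
  apply (is_RInt_gen_unique (V := R_CompleteNormedModule)).
  apply (is_RInt_gen_Chasles (V := R_NormedModule)) with (b := 0).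
  - apply ll_lim.
  - apply is_RInt_gen_at_point. apply (RInt_correct (V := R_CompleteNormedModule)), ex_RInt_pdf.
Qed.


Definition MM (x : R) : R := - (gauss_pdf x * x / (1 + x ^ 2)).
Definition dMM (x : R) : R := gauss_pdf x * (x ^ 4 + 2 * x ^ 2 - 1) / (1 + x ^ 2) ^ 2.

Lemma MM_deriv (x : R) : is_derive MM x (dMM x).
Proof.
  unfold MM, dMM, gauss_pdf. auto_derive.
  - generalize (pos1t x); simpl; lra.
  - match goal with |- context [exp ?A] => replace A with (- x ^ 2 / 2) by (simpl; field) end.
    field. split; [generalize ss_pos; unfold ss; lra | generalize (pos1t x); lra].
Qed.

Lemma dMM_cont x : continuous dMM x.
Proof.
  apply (ex_derive_continuous (K := R_AbsRing) (V := R_NormedModule)); unfold dMM, gauss_pdf; auto_derive.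
  generalize (pos1t x); simpl; nra.
Qed.

Lemma dMM_le x : dMM x <= gauss_pdf x.
Proof.
  unfold dMM. generalize (pdf_pos x) (pos1t x); intros.
  apply Rmult_le_reg_r with ((1 + x ^ 2) ^ 2). nra.
  unfold Rdiv. rewrite Rmult_assoc, Rinv_l by nra. nra.
Qed.

Lemma Q_le1 z : 1 - gauss_cdf z <= 1.
Proof.
  rewrite cdf_eq. destruct (Rle_or_lt 0 z).
  - generalize (RInt_pdf_ge0 0 z H) ll_ge; lra.
  - generalize (ll_ub z (Rlt_le _ _ H)) (chasles 0 z 0).
    rewrite (RInt_point (V := R_CompleteNormedModule)). unfold zero; simpl. lra.
Qed.

Lemma Q_lower z c : z <= c -> 0 <= c -> 1 / 2 - c / ss <= 1 - gauss_cdf z.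
Proof.
  intros Hz Hc. rewrite cdf_eq.
  assert (H1 := chasles 0 z c). assert (H2 := RInt_pdf_ge0 z c Hz).
  assert (H3 : RInt gauss_pdf 0 c <= RInt (fun _ => / ss) 0 c).
  { apply RInt_le; auto. apply ex_RInt_pdf. apply ex_RInt_const. intros; apply pdf_le. }
  rewrite (RInt_const (V := R_CompleteNormedModule)) in H3. unfold scal in H3; simpl in H3; unfold mult in H3; simpl in H3.
  generalize ll_le; intros. unfold Rdiv. lra.
Qed.

Lemma Mills z : 0 < z -> gauss_pdf z * z / (1 + z ^ 2) <= 1 - gauss_cdf z.
Proof.
  intros Hz.
  assert (Hall : forall t, z < t -> gauss_pdf z * z / (1 + z ^ 2) - / t <= 1 - gauss_cdf z).
  { intros t Ht.
    rewrite cdf_eq.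
    assert (H1 := chasles 0 z t).
    assert (H2 := half_right t ltac:(lra)).
    assert (H3 : RInt dMM z t <= RInt gauss_pdf z t).
    { apply RInt_le. lra. apply (ex_RInt_continuous (V := R_CompleteNormedModule)); intros; apply dMM_cont.
      apply ex_RInt_pdf. intros; apply dMM_le. }
    assert (H4 : is_RInt dMM z t (minus (MM t) (MM z))).
    { apply (is_RInt_derive (V := R_CompleteNormedModule)). intros; apply MM_deriv. intros; apply dMM_cont. }
    apply (is_RInt_unique (V := R_CompleteNormedModule)) in H4. rewrite H4 in H3.
    unfold minus, plus, opp in H3; simpl in H3. unfold MM in H3.
    assert (H5 : gauss_pdf t * t / (1 + t ^ 2) <= / t).
    { generalize (pdf_le t) (pdf_pos t) (pos1t t) ss_big; intros.
      assert (/ ss <= 1). { apply Rmult_le_reg_l with ss. lra. rewrite Rinv_r; lra. }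
      apply Rmult_le_reg_l with t. lra. rewrite Rinv_r by lra.
      unfold Rdiv. apply Rmult_le_reg_r with (1 + t ^ 2). lra.
      rewrite !Rmult_assoc, Rinv_l by lra. nra. }
    generalize ll_le; intros. lra. }
  apply Rnot_lt_le. intros Hc.
  set (d := gauss_pdf z * z / (1 + z ^ 2) - (1 - gauss_cdf z)) in *.
  assert (Hd : 0 < d) by (unfold d; lra).
  set (t := z + 2 / d).
  assert (Ht : z < t). { unfold t. apply Rplus_lt_reg_l with (- z). ring_simplify. apply Rdiv_lt_0_compat; lra. }
  specialize (Hall t Ht).
  assert (/ t < d / 2).
  { assert (Htd : t * d = z * d + 2) by (unfold t; field; lra).
    assert (0 < t) by lra.
    apply Rmult_lt_reg_l with t. lra. rewrite Rinv_r by lra. nra. }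
  unfold d in *. lra.
Qed.


Lemma ln_le_my x y : 0 < x -> x <= y -> ln x <= ln y.
Proof. intros Hx [H|H]. apply Rlt_le, ln_increasing; auto. subst; lra. Qed.

Lemma rpow_ge_self q y : 0 < q -> q <= 1 -> 0 <= y <= 1 -> q <= Rpower q y.
Proof.
  intros Hq Hq1 Hy. unfold Rpower.
  assert (ln q <= 0) by (rewrite <- ln_1; apply ln_le_my; lra).
  rewrite <- (exp_ln q) at 1 by lra. apply exp_le_exp. nra.
Qed.

Lemma pdf_abs_bound z a : 0 < a < 1 -> gauss_pdf z * abs_rpow z a <= / ss.
Proof.
  intros Ha. generalize (Rinv_0_lt_compat _ ss_pos); intro Hs.
  unfold abs_rpow. destruct (Req_EM_T z 0) as [->|Hz].
  { lra. }
  assert (Haz : 0 < Rabs z) by (apply Rabs_pos_lt; auto).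
  destruct (Rle_or_lt (Rabs z) 1) as [H1|H1].
  - assert (Rpower (Rabs z) a <= 1).
    { unfold Rpower. rewrite <- exp_0. apply exp_le_exp.
      assert (ln (Rabs z) <= 0) by (rewrite <- ln_1; apply ln_le_my; lra). nra. }
    assert (0 <= Rpower (Rabs z) a) by (unfold Rpower; apply Rlt_le, exp_pos).
    generalize (pdf_le z) (pdf_pos z); intros. nra.
  - assert (Rpower (Rabs z) a <= Rabs z).
    { rewrite <- (Rpower_1 (Rabs z)) at 2 by lra. apply Rle_Rpower; lra. }
    assert (0 <= Rpower (Rabs z) a) by (unfold Rpower; apply Rlt_le, exp_pos).
    rewrite pdf_eq.
    assert (gg z * Rabs z <= 1).
    { unfold gg. generalize (exp_ineq1_le (z ^ 2 / 2)); intro He.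
      assert (Rabs z <= 1 + z ^ 2 / 2).
      { destruct (Rle_or_lt 0 z); [rewrite Rabs_right by lra|rewrite Rabs_left by lra]; nra. }
      replace (- z ^ 2 / 2) with (- (z ^ 2 / 2)) by field. rewrite exp_Ropp.
      generalize (exp_pos (z ^ 2 / 2)); intros.
      apply Rmult_le_reg_l with (exp (z ^ 2 / 2)); auto.
      rewrite <- Rmult_assoc, Rinv_r by lra. lra. }
    assert (0 < gg z) by (unfold gg; apply exp_pos).
    assert (gg z * Rpower (Rabs z) a <= gg z * Rabs z) by (apply Rmult_le_compat_l; lra).
    rewrite Rmult_assoc. apply Rle_trans with (/ ss * 1); [|lra].
    apply Rmult_le_compat_l; lra.
Qed.


Lemma X_bound a z : 0 < a <= 1 -> 0 < z -> a * z * exp (- (a * z ^ 2) / 2) <= 2 / 3.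
Proof.
  intros Ha Hz.
  set (y := a * z ^ 2).
  assert (Hy : 0 <= y) by (unfold y; nra).
  set (u := exp (- y / 2)).
  assert (Hu : 0 < u) by apply exp_pos.
  assert (HuE : u * u * exp y = 1).
  { unfold u. rewrite <- !exp_plus. rewrite <- exp_0. f_equal. field. }
  assert (HE : (1 + y / 3) ^ 3 <= exp y).
  { replace y with (y / 3 + y / 3 + y / 3) at 2 by field.
    rewrite !exp_plus. generalize (exp_ineq1_le (y / 3)); intros.
    simpl. assert (1 <= 1 + y / 3) by lra.
    assert (0 <= (1 + y / 3) * (1 + y / 3)) by nra.
    assert ((1 + y / 3) * (1 + y / 3) <= exp (y / 3) * exp (y / 3)) by nra.
    nra. }
  assert (HP : y <= 4 / 9 * (1 + y / 3) ^ 3).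
  { assert (0 <= (y - 3 / 2) ^ 2 * (y + 12)). { apply Rmult_le_pos. apply pow2_ge_0. lra. }
    assert (4 / 9 * (1 + y / 3) ^ 3 - y = 4 / 243 * ((y - 3 / 2) ^ 2 * (y + 12))) by field. lra. }
  assert (Hyu : y * (u * u) <= 4 / 9).
  { assert (0 <= u * u) by nra.
    apply Rle_trans with (4 / 9 * (1 + y / 3) ^ 3 * (u * u)). nra.
    apply Rle_trans with (4 / 9 * exp y * (u * u)). nra. nra. }
  set (X := a * z * u).
  assert (HX : X * X <= 4 / 9).
  { unfold X. replace (a * z * u * (a * z * u)) with (a * (y * (u * u))) by (unfold y; ring).
    assert (0 <= y * (u * u)) by nra. nra. }
  assert (0 <= X) by (unfold X; apply Rmult_le_pos; nra).
  fold u. fold X. nra.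
Qed.

Lemma caseB a z : 0 < a < 1 -> 18 / 25 < z ->
  a * (gauss_pdf z * Rpower z a) <= 2 * Rpower (gauss_pdf z * z / (1 + z ^ 2)) (1 - a).
Proof.
  intros Ha Hz.
  assert (Hz0 : 0 < z) by lra.
  set (A0 := ln ss).
  assert (HA0 : 0 <= A0).
  { unfold A0. rewrite <- ln_1. apply ln_le_my. lra. generalize ss_big; lra. }
  assert (Hpdf : gauss_pdf z = exp (- z ^ 2 / 2 - A0)).
  { unfold Rminus. rewrite exp_plus, exp_Ropp. unfold A0. rewrite exp_ln by apply ss_pos.
    unfold gauss_pdf. fold ss. reflexivity. }
  assert (H1z : 0 < 1 + z ^ 2) by apply pos1t.
  assert (HlnL : ln (gauss_pdf z * z / (1 + z ^ 2)) = (- z ^ 2 / 2 - A0) + ln z - ln (1 + z ^ 2)).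
  { assert (Hp := pdf_pos z).
    rewrite ln_div by (auto; apply Rmult_lt_0_compat; auto). rewrite ln_mult by auto.
    rewrite Hpdf, ln_exp. ring. }
  set (D := ln (1 + z ^ 2) - 2 * ln z).
  set (K := 949 / 324).
  assert (HD0 : 0 <= D).
  { unfold D. assert (ln (z * z) <= ln (1 + z ^ 2)) by (apply ln_le_my; nra).
    rewrite ln_mult in H by lra. lra. }
  assert (HDK : D <= ln K).
  { unfold D. assert (ln (1 + z ^ 2) <= ln (K * (z * z))) by (apply ln_le_my; unfold K; nra).
    rewrite !ln_mult in H by (unfold K; nra). lra. }
  unfold Rpower. rewrite HlnL. rewrite Hpdf.
  set (A := - z ^ 2 / 2 - A0 + a * ln z).
  set (B := (1 - a) * (- z ^ 2 / 2 - A0 + ln z - ln (1 + z ^ 2))).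
  rewrite <- exp_plus. fold A.
  assert (HAB : A - B = a * (- z ^ 2 / 2 - A0) + ln z + (1 - a) * D) by (unfold A, B, D; ring).
  set (C := - (a * z ^ 2) / 2 + ln z + ln K).
  assert (HC : A - B <= C).
  { rewrite HAB. unfold C. assert ((1 - a) * D <= D) by nra. assert (0 <= a * A0) by nra. lra. }
  assert (HeC : exp C = exp (- (a * z ^ 2) / 2) * z * K).
  { unfold C. rewrite !exp_plus, !exp_ln; auto. unfold K; lra. }
  assert (HeA : exp A = exp B * exp (A - B)) by (rewrite <- exp_plus; f_equal; ring).
  assert (Hle : exp (A - B) <= exp C) by (apply exp_le_exp; auto).
  rewrite HeC in Hle.
  assert (HX := X_bound a z ltac:(lra) Hz0).
  assert (0 < exp B) by apply exp_pos.
  rewrite HeA.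
  assert (a * exp (A - B) <= 2).
  { apply Rle_trans with (a * (exp (- (a * z ^ 2) / 2) * z * K)). apply Rmult_le_compat_l; lra.
    replace (a * (exp (- (a * z ^ 2) / 2) * z * K)) with (a * z * exp (- (a * z ^ 2) / 2) * K) by ring.
    assert (0 <= a * z * exp (- (a * z ^ 2) / 2)).
    { apply Rmult_le_pos; [nra|apply Rlt_le, exp_pos]. }
    unfold K. nra. }
  nra.
Qed.

Lemma main (alpha z : R) (Ha0 : 0 < alpha) (Ha1 : alpha < 1) :
  gauss_pdf z * abs_rpow z alpha / Rpower (1 - gauss_cdf z) (1 - alpha)
  <= 2 / alpha.
Proof.
  set (Q := 1 - gauss_cdf z).
  assert (HQ1 : Q <= 1) by apply Q_le1.
  assert (Hss := ss_big). assert (Hsp := ss_pos).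
  destruct (Rle_or_lt z (18 / 25)) as [Hz|Hz].
  - assert (HQl := Q_lower z (18 / 25) Hz ltac:(lra)). fold Q in HQl.
    assert (Hc : 1 / ss <= 2 * (1 / 2 - 18 / 25 / ss)).
    { unfold Rdiv. apply Rmult_le_reg_l with ss. lra.
      replace (ss * (2 * (1 * / 2 - 18 * / 25 * / ss))) with (ss - 36 / 25) by (field; lra).
      rewrite Rmult_1_l, Rinv_r; lra. }
    assert (HQp : 0 < Q).
    { apply Rlt_le_trans with (1 / 2 - 18 / 25 / ss); auto.
      assert (0 < 1 / ss) by (apply Rdiv_lt_0_compat; lra). lra. }
    assert (HR := rpow_ge_self Q (1 - alpha) HQp HQ1 ltac:(lra)).
    set (R := Rpower Q (1 - alpha)) in *.
    assert (HP := pdf_abs_bound z alpha ltac:(lra)).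
    assert (HRp : 0 < R) by lra.
    apply Rmult_le_reg_r with R; auto.
    unfold Rdiv. rewrite Rmult_assoc, Rinv_l, Rmult_1_r by lra.
    assert (2 * R <= 2 * / alpha * R).
    { apply Rmult_le_compat_r. lra. 
      assert (1 <= / alpha). { apply Rmult_le_reg_l with alpha; auto. rewrite Rinv_r; lra. }
      lra. }
    unfold Rdiv in Hc. rewrite Rmult_1_l in Hc. lra.
  - assert (Hz0 : 0 < z) by lra.
    set (L := gauss_pdf z * z / (1 + z ^ 2)).
    assert (HLp : 0 < L).
    { unfold L. apply Rdiv_lt_0_compat. apply Rmult_lt_0_compat; auto. apply pdf_pos. apply pos1t. }
    assert (HLQ : L <= Q) by (apply Mills; auto).
    assert (HRL : Rpower L (1 - alpha) <= Rpower Q (1 - alpha)) by (apply Rle_Rpower_l; lra).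
    assert (HB := caseB alpha z ltac:(lra) Hz). fold L in HB.
    assert (HabsE : abs_rpow z alpha = Rpower z alpha).
    { unfold abs_rpow. destruct (Req_EM_T z 0). lra. rewrite Rabs_right by lra. reflexivity. }
    rewrite HabsE. fold Q.
    set (R := Rpower Q (1 - alpha)) in *.
    set (RL := Rpower L (1 - alpha)) in *.
    assert (HRLp : 0 < RL) by (unfold RL, Rpower; apply exp_pos).
    assert (HRp : 0 < R) by lra.
    apply Rmult_le_reg_r with R; auto.
    unfold Rdiv. rewrite Rmult_assoc, Rinv_l, Rmult_1_r by lra.
    apply Rmult_le_reg_l with alpha; auto.
    replace (alpha * (2 * / alpha * R)) with (2 * R) by (field; lra).
    lra.
Qed.

Theorem lemma5 (alpha z : R) (Ha0 : 0 < alpha) (Ha1 : alpha < 1) :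
  gauss_pdf z * abs_rpow z alpha / Rpower (1 - gauss_cdf z) (1 - alpha)
  <= 2 / alpha.
Proof. exact (main alpha z Ha0 Ha1). Qed.
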